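(* For each integer $n\ge0$ let $\theta^\Delta_n(x)=\sum_{k=0}^n\frac{(n+k)!}{2^k(n-k)!\,k!}(x)_{n-k}$, where $(x)_j=x(x-1)\cdots(x-j+1)$ and $(x)_0=1$. Then for every $n\ge1$ and every $x\in\mathbb{C}$, \[ \theta^\Delta_n(x+1)-2\theta^\Delta_n(x)+x\,\theta^\Delta_{n-1}(x-1)=0, \] \[ \theta^\Delta_{n+1}(x)+(x-2n-1)\theta^\Delta_n(x)-2x\,\theta^\Delta_n(x-1)=0 . \] *)

(* Defs.v *)
From HB Require Import structures.
From mathcomp Require Import all_boot all_order all_algebra.
From mathcomp Require Import complex.
From mathcomp Require Import Rstruct.
Set Implicit Arguments. Unset Strict Implicit. Unset Printing Implicit Defensive.
Import Order.TTheory GRing.Theory Num.Theory.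
Local Open Scope ring_scope.

Notation Cplx := (complex.complex Rdefinitions.R).

Definition falling (F : pzRingType) (x : F) (j : nat) : F :=
  \prod_(i < j) (x - i%:R).

Definition thetaD (F : fieldType) (n : nat) (x : F) : F :=
  \sum_(0 <= k < n.+1)
     ((n + k)`!%:R / (2 ^+ k * (n - k)`!%:R * k`!%:R)) * falling x (n - k).

(* Main.v *)
Require Import Defs.
From HB Require Import structures.
From mathcomp Require Import all_boot all_order all_algebra.
From mathcomp Require Import complex Rstruct.
From mathcomp Require Import zify ring lra.
Import GRing.Theory Num.Theory.
Local Open Scope ring_scope.

Definition A (R : numFieldType) (n j : nat) : R :=
  if (j <= n)%N then (2*n - j)`!%:R / (2 ^+ (n - j) * j`!%:R * (n - j)`!%:R) else 0.

Lemma fallS_r (R : numFieldType) (x : R) j : falling x j.+1 = falling x j * (x - j%:R).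
Proof. by rewrite /falling big_ord_recr. Qed.

Lemma fallS_l (R : numFieldType) (x : R) j : falling x j.+1 = x * falling (x - 1) j.
Proof.
rewrite /falling big_ord_recl /= subr0; congr (_ * _); apply: eq_bigr => i _.
rewrite /bump /= add1n -addn1 natrD; ring.
Qed.

Lemma fall_shift (R : numFieldType) (x : R) j :
  falling (x+1) j.+1 = falling x j.+1 + j.+1%:R * falling x j.
Proof. rewrite fallS_l addrK fallS_r -addn1 natrD; ring. Qed.

Lemma fall_xS (R : numFieldType) (x : R) j :
  x * falling x j = falling x j.+1 + j%:R * falling x j.
Proof. rewrite fallS_r; ring. Qed.

Lemma theta_A (R : numFieldType) n (x : R) N : (n < N)%N ->
  thetaD n x = \sum_(0 <= j < N) A R n j * falling x j.
Proof.
move=> HN; rewrite /thetaD big_nat_rev /=.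
rewrite [RHS](@big_cat_nat _ _ _ n.+1 0 N) //= [X in _ = _ + X]big_nat_cond [X in _ = _ + X]big1 ?addr0; last first.
  move=> j /andP[/andP[Hj _] _]; rewrite /A ifF ?mul0r //; apply/negbTE; rewrite -ltnNge //.
apply: eq_big_nat => i /andP[_ Hi].
rewrite /A ifT; last by lia.
rewrite add0n subSS.
have -> : (n - (n - i) = i)%N by lia.
have -> : (n + (n - i) = 2 * n - i)%N by lia.
done.
Qed.

Lemma natf_neq0 (R : numFieldType) k : (0 < k)%N -> (k%:R : R) != 0.
Proof. by rewrite pnatr_eq0 -lt0n. Qed.

Lemma addn_neq0 (R : numFieldType) k a : (0 < a)%N -> (a%:R + k%:R : R) != 0.
Proof. by move=> ha; rewrite -natrD natf_neq0 // addn_gt0 ha. Qed.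

Lemma p2_neq0 (R : numFieldType) k : (2 : R) ^+ k != 0.
Proof. by rewrite expf_neq0 // (natf_neq0 R 2 isT). Qed.

Lemma addr1_neq0 (R : numFieldType) k : (k%:R + 1 : R) != 0.
Proof. by rewrite natr1 natf_neq0. Qed.
Lemma add1r_neq0 (R : numFieldType) k : (1 + k%:R : R) != 0.
Proof. by rewrite addrC addr1_neq0. Qed.

Ltac sidec := rewrite ?addr1_neq0 ?add1r_neq0 ?(addn_neq0 _ _ _ (isT : (0 < 1)%N)) ?(addn_neq0 _ _ _ (isT : (0 < 2)%N)) ?(addn_neq0 _ _ _ (isT : (0 < 3)%N)) ?p2_neq0 ?natf_neq0 ?fact_gt0 //.

Lemma C1g (R : numFieldType) n j m : n = (j + m + 2)%N ->
  (j+2)%:R * A R n (j+2) - A R n (j+1) + A R (n-1) j = 0.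
Proof.
move=> ->; rewrite /A !ifT; try lia.
have -> : (2 * (j + m + 2) - (j + 2) = j + 2 * m + 2)%N by lia.
have -> : (j + m + 2 - (j + 2) = m)%N by lia.
have -> : (2 * (j + m + 2) - (j + 1) = (j + 2 * m + 2).+1)%N by lia.
have -> : (j + m + 2 - (j + 1) = m.+1)%N by lia.
have -> : (2 * (j + m + 2 - 1) - j = j + 2 * m + 2)%N by lia.
have -> : (j + m + 2 - 1 - j = m.+1)%N by lia.
have -> : (j + 2 = j.+1.+1)%N by lia.
have -> : (j + 1 = j.+1)%N by lia.
rewrite !factS !natrM !exprS.
have h1 := @natf_neq0 R _ (fact_gt0 j).
have h2 := @natf_neq0 R _ (fact_gt0 m).
have h3 := @natf_neq0 R _ (fact_gt0 (j + 2 * m + 2)).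
field; sidec.
Qed.

Lemma A_out (R : numFieldType) n j : (n < j)%N -> A R n j = 0.
Proof. by move=> h; rewrite /A ifF //; apply/negbTE; rewrite -ltnNge. Qed.

Lemma A_diag (R : numFieldType) n : A R n n = 1.
Proof.
rewrite /A leqnn subnn expr0 mul1r fact0 mulr1.
have -> : (2 * n - n = n)%N by lia.
by rewrite divff // natf_neq0 // fact_gt0.
Qed.

Lemma C1 (R : numFieldType) n j : (1 <= n)%N ->
  j.+2%:R * A R n j.+2 - A R n j.+1 + A R (n-1) j = 0.
Proof.
move=> n1; case: (ltnP j.+1 n) => h.
  have := @C1g R n j (n - j - 2); rewrite !addn2 addn1; apply; lia.
case: (eqVneq j.+1 n) => [e|ne].
  rewrite A_out; last by lia.
  rewrite -e A_diag subn1 /= A_diag; ring.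
rewrite !A_out; try lia. ring.
Qed.

Lemma fact_add1 k : ((k + 1)`! = (k + 1) * k`!)%N.
Proof. by rewrite addn1 factS. Qed.

Lemma B0 (R : numFieldType) n : (1 <= n)%N -> (0.+1)%:R * A R n 1 - A R n 0 = 0.
Proof.
case: n => // k _; rewrite /A leq0n ltn0Sn /=.
have -> : (2 * k.+1 - 1 = k + k + 1)%N by lia.
have -> : (2 * k.+1 - 0 = k + k + 1 + 1)%N by lia.
have -> : (k.+1 - 0 = k + 1)%N by lia.
rewrite subSS subn0 !fact_add1 !natrM exprD expr1.
have h2 := @natf_neq0 R _ (fact_gt0 k).
have h3 := @natf_neq0 R _ (fact_gt0 (k + k)).
rewrite ?natrD; field; sidec.
Qed.

Lemma C2a (R : numFieldType) n : A R n.+1 0 + (0%:R - (2*n+1)%:R) * A R n 0 = 0.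
Proof.
rewrite /A !leq0n /=.
rewrite !subn0 fact0.
have -> : (2 * n.+1 = (2 * n).+2)%N by lia.
rewrite !factS !natrM exprS.
have h2 := @natf_neq0 R _ (fact_gt0 n).
have h3 := @natf_neq0 R _ (fact_gt0 (2 * n)).
rewrite ?natrD ?natrM; field; sidec.
Qed.

Lemma C2g (R : numFieldType) n j m : n = (j + m + 1)%N ->
  A R n.+1 j.+1 + (j.+1%:R - (2*n+1)%:R) * A R n j.+1 - A R n j = 0.
Proof.
move=> ->; rewrite /A !ifT; try lia.
have -> : (2 * (j + m + 1).+1 - j.+1 = (j + 2 * m + 1).+2)%N by lia.
have -> : ((j + m + 1).+1 - j.+1 = m.+1)%N by lia.
have -> : (2 * (j + m + 1) - j.+1 = j + 2 * m + 1)%N by lia.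
have -> : (j + m + 1 - j.+1 = m)%N by lia.
have -> : (2 * (j + m + 1) - j = (j + 2 * m + 1).+1)%N by lia.
have -> : (j + m + 1 - j = m.+1)%N by lia.
rewrite !factS !natrM !exprS.
have h1 := @natf_neq0 R _ (fact_gt0 j).
have h2 := @natf_neq0 R _ (fact_gt0 m).
have h3 := @natf_neq0 R _ (fact_gt0 (j + 2 * m + 1)).
rewrite ?natrD ?natrM; field; sidec.
Qed.

Lemma C2 (R : numFieldType) n j :
  A R n.+1 j.+1 + (j.+1%:R - (2*n+1)%:R) * A R n j.+1 - A R n j = 0.
Proof.
case: (ltnP j n) => h.
  by apply: (@C2g R n j (n - j - 1)); lia.
case: (eqVneq j n) => [->|ne].
  rewrite A_diag A_out // A_diag; ring.
rewrite !A_out; try lia. ring.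
Qed.

Lemma fall0 (R : numFieldType) (x : R) : falling x 0 = 1.
Proof. by rewrite /falling big_ord0. Qed.

Lemma comb (R : comRingType) (l a b : R) : a = 0 -> b = 0 -> l = a + b -> l = 0.
Proof. by move=> -> -> ->; rewrite addr0. Qed.

Lemma diff1 (R : numFieldType) n (x : R) :
  thetaD n (x + 1) - thetaD n x =
  \sum_(0 <= j < n.+2) (j.+1%:R * A R n j.+1) * falling x j.
Proof.
rewrite (@theta_A R n (x+1) n.+3 ltac:(lia)) (@theta_A R n x n.+3 ltac:(lia)) (@big_nat_recl _ _ _ n.+2 0) // (@big_nat_recl _ _ _ n.+2 0) // !fall0.
under eq_bigr => j _ do rewrite fall_shift mulrDr.
rewrite big_split /=.
have e : forall a b c d : R, a + (b + c) - (d + b) = c + (a - d) by move=> *; ring.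
rewrite e subrr addr0; apply: eq_bigr => j _; ring.
Qed.

Lemma thx (R : numFieldType) m (x : R) N : (m < N)%N ->
  x * thetaD m (x - 1) = \sum_(0 <= j < N) A R m j * falling x j.+1.
Proof.
move=> h; rewrite (@theta_A R m _ N) // mulr_sumr; apply: eq_bigr => j _.
rewrite fallS_l; ring.
Qed.

Lemma main1 (R : numFieldType) n (x : R) : (1 <= n)%N ->
  thetaD n (x + 1) - 2 * thetaD n x + x * thetaD n.-1 (x - 1) = 0.
Proof.
move=> n1.
have e : thetaD n (x + 1) - 2 * thetaD n x + x * thetaD n.-1 (x - 1) =
  (thetaD n (x + 1) - thetaD n x) - thetaD n x + x * thetaD n.-1 (x - 1) by ring.
rewrite e diff1 (@theta_A R n _ n.+2 ltac:(lia)) (@thx R n.-1 _ n.+2 ltac:(lia)).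
rewrite -sumrB [X in X + _]big_nat_recl // [X in _ + X]big_nat_recr //=.
rewrite (@A_out R n.-1 n.+1); last by lia.
rewrite mul0r addr0 fall0 !mulr1 B0 // add0r -big_split /=.
apply: big1 => j _; rewrite -mulrBl -mulrDl -subn1 C1 // mul0r //.
Qed.

Lemma comb' (R : numFieldType) (a0 b0 S0 S1 S3 : R) :
  a0 + b0 = 0 -> S1 + S3 - S0 = 0 -> a0 + S1 + (S0 + (b0 + S3)) - 2 * S0 = 0.
Proof.
move=> h1 h2.
have -> : a0 + S1 + (S0 + (b0 + S3)) - 2 * S0 = (a0 + b0) + (S1 + S3 - S0) by ring.
by rewrite h1 h2 addr0.
Qed.

Lemma main2 (R : numFieldType) n (x : R) :
  thetaD n.+1 x + (x - ((2 * n + 1)%N%:R)) * thetaD n x - 2 * x * thetaD n (x - 1) = 0.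
Proof.
have E1 : thetaD n.+1 x = A R n.+1 0 + \sum_(0 <= j < n.+2) A R n.+1 j.+1 * falling x j.+1.
  by rewrite (@theta_A R n.+1 _ n.+3 ltac:(lia)) big_nat_recl // fall0 mulr1.
have E4 : \sum_(0 <= j < n.+3) A R n j * falling x j.+1 = \sum_(0 <= j < n.+2) A R n j * falling x j.+1.
  by rewrite big_nat_recr //= A_out ?mul0r ?addr0 //; lia.
have E2 : (x - (2 * n + 1)%N%:R) * thetaD n x = \sum_(0 <= j < n.+2) A R n j * falling x j.+1 +
   ((0%:R - (2 * n + 1)%N%:R) * A R n 0 + \sum_(0 <= j < n.+2) (j.+1%:R - (2 * n + 1)%N%:R) * A R n j.+1 * falling x j.+1).
  rewrite (@theta_A R n _ n.+3 ltac:(lia)) mulr_sumr.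
  have -> : \sum_(0 <= j < n.+3) (x - (2 * n + 1)%N%:R) * (A R n j * falling x j) =
     \sum_(0 <= j < n.+3) (A R n j * falling x j.+1 + (j%:R - (2 * n + 1)%N%:R) * A R n j * falling x j).
    by apply: eq_bigr => j _; rewrite fallS_r; ring.
  rewrite big_split /= E4 big_nat_recl // fall0 mulr1 //.
have E3 : 2 * x * thetaD n (x - 1) = 2 * \sum_(0 <= j < n.+2) A R n j * falling x j.+1.
  by rewrite -mulrA (@thx R n _ n.+2 ltac:(lia)).
have K2 : \sum_(0 <= j < n.+2) A R n.+1 j.+1 * falling x j.+1 +
   \sum_(0 <= j < n.+2) (j.+1%:R - (2 * n + 1)%N%:R) * A R n j.+1 * falling x j.+1 -
   \sum_(0 <= j < n.+2) A R n j * falling x j.+1 = 0.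
  rewrite -big_split -sumrB; apply: big1 => j _.
  by rewrite /= -mulrDl -mulrBl C2 mul0r.
rewrite E1 E2 E3.
move: (C2a R n) K2.
set a0 := A R n.+1 0.
set b0 := (_ * A R n 0).
set S1 := \sum_(0 <= j < n.+2) A R n.+1 j.+1 * falling x j.+1.
set S0 := \sum_(0 <= j < n.+2) A R n j * falling x j.+1.
set S3 := \sum_(0 <= j < n.+2) _ * A R n j.+1 * falling x j.+1.
move=> h1 h2.
have -> : a0 + S1 + (S0 + (b0 + S3)) - 2 * S0 = (a0 + b0) + (S1 + S3 - S0) by ring.
by rewrite h1 h2 addr0.
Qed.

Theorem mainTheorem12 (n : nat) (x : Cplx) : (1 <= n)%N ->
  thetaD n (x + 1) - 2 * thetaD n x + x * thetaD n.-1 (x - 1) = 0 /\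
  thetaD n.+1 x + (x - ((2 * n + 1)%N%:R)) * thetaD n x - 2 * x * thetaD n (x - 1) = 0.
Proof.
move=> n1; split; [apply: main1; exact: n1 | apply: main2].
Qed.
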